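(* Let $K$ be a simple $\Delta$-ring which is a $\mathbb Q$-algebra, with field of constants $C$, and assume there exists a morphism of $C$-algebras $\varphi:K\to C$. Let $A$ be a $C$-algebra endowed with the zero derivations, endow $A\otimes_C K$ with the derivations $\tilde\partial(a\otimes\lambda)=a\otimes\partial\lambda$, and let $i:A\to A\otimes_CK$ be $a\mapsto a\otimes1$. Then for every $\mathfrak p\in\mathrm{Spec}\,A$, the ideal $(i(\mathfrak p))$ generated by $i(\mathfrak p)$ is a prime $\Delta$-ideal of $A\otimes_C K$.
   Context: $\Delta$ is a fixed set; rings are commutative with unit. A $\Delta$-ring is a ring with a map $\Delta\to\mathrm{Der}(R)$; a $\Delta$-ideal is an ideal stable under all $\partial\in\Delta$; a $\Delta$-ring is simple if its only $\Delta$-ideals are $0$ and $R$; $C$ is the field of elements killed by all $\partial\in\Delta$. *)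

(* Defs.v *)
From mathcomp Require Import all_boot all_algebra.
Set Implicit Arguments. Unset Strict Implicit. Unset Printing Implicit Defensive.
Import GRing.Theory.
Local Open Scope ring_scope.

Definition is_ideal (R : comNzRingType) (I : R -> Prop) : Prop :=
  [/\ I 0, (forall x y, I x -> I y -> I (x + y)) & (forall r x, I x -> I (r * x))].

Definition is_prime_ideal (R : comNzRingType) (I : R -> Prop) : Prop :=
  [/\ is_ideal I, ~ I 1 & (forall x y, I (x * y) -> I x \/ I y)].

Definition ideal_gen (R : comNzRingType) (S : R -> Prop) : R -> Prop :=
  fun x => exists n (r s : 'I_n -> R), (forall k, S (s k)) /\ x = \sum_(k < n) r k * s k.

Definition img (A B : Type) (f : A -> B) (P : A -> Prop) : B -> Prop :=
  fun y => exists2 x, P x & y = f x.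

Definition is_derivation (R : comNzRingType) (d : R -> R) : Prop :=
  (forall x y, d (x + y) = d x + d y) /\ (forall x y, d (x * y) = d x * y + x * d y).

Definition is_Delta_ideal (Delta : Type) (R : comNzRingType) (d : Delta -> R -> R)
  (I : R -> Prop) : Prop :=
  is_ideal I /\ (forall D x, I x -> I (d D x)).

Definition Delta_simple (Delta : Type) (R : comNzRingType) (d : Delta -> R -> R) : Prop :=
  forall I, is_Delta_ideal d I -> (forall x, I x <-> x = 0) \/ (forall x, I x).

Definition is_alg_morph (C : fieldType) (A B : comAlgType C) (f : A -> B) : Prop :=
  [/\ (forall x y, f (x + y) = f x + f y), (forall x y, f (x * y) = f x * f y),
      f 1 = 1 & (forall (c : C) x, f (c *: x) = c *: f x)].

(* (T, i, j) is a tensor product A (x)_C K of commutative C-algebras: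
   universal property of the coproduct (pushout over C) of commutative C-algebras. *)
Definition is_tensor_product (C : fieldType) (A K T : comAlgType C)
  (i : A -> T) (j : K -> T) : Prop :=
  [/\ is_alg_morph i, is_alg_morph j &
   forall (R : comAlgType C) (f : A -> R) (g : K -> R),
     is_alg_morph f -> is_alg_morph g ->
     exists h : T -> R, [/\ is_alg_morph h, (forall a, h (i a) = f a),
                            (forall l, h (j l) = g l) &
       forall h' : T -> R, is_alg_morph h' -> (forall a, h' (i a) = f a) ->
                           (forall l, h' (j l) = g l) -> forall t, h' t = h t]].

(* Main.v *)
Require Import Defs.
From mathcomp Require Import all_boot all_algebra.
Import GRing.Theory.
Local Open Scope ring_scope.
From HB Require Import structures.
From mathcomp Require Import ring.
From Stdlib Require Import ClassicalEpsilon Classical.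
Set Implicit Arguments. Unset Strict Implicit. Unset Printing Implicit Defensive.
Definition asb (P : Prop) : bool := if excluded_middle_informative P then true else false.
Lemma asbP (P : Prop) : reflect P (asb P).
Proof. rewrite /asb; case: excluded_middle_informative => H; constructor => //. Qed.

Section Sub.
Variables (C : fieldType) (T : comAlgType C) (S : pred T).
Variable Salg : GRing.subalg_closed S.
Definition SK : pred T := let _ := Salg in S.
HB.instance Definition _ := GRing.isSubalgClosed.Build C T SK Salg.
Definition ST : Type := {x : T | x \in SK}.
HB.instance Definition _ := [isSub of ST for (@sval T (fun x => x \in SK))].
HB.instance Definition _ := [Choice of ST by <:].
HB.instance Definition _ := [SubChoice_isSubAlgebra of ST by <:].
HB.instance Definition _ := [SubNzRing_isSubComNzRing of ST by <:].
Lemma ST_valM (x y : ST) : val (x * y) = val x * val y. Proof. by []. Qed.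
Lemma ST_valZ (c : C) (x : ST) : val (c *: x) = c *: val x. Proof. by []. Qed.
Lemma ST_val1 : val (1 : ST) = 1. Proof. by []. Qed.
Lemma ST_valD (x y : ST) : val (x + y) = val x + val y. Proof. by []. Qed.
End Sub.

Section Morph.
Variables (C : fieldType) (A B : comAlgType C) (f : A -> B) (Hf : is_alg_morph f).
Lemma am0 : f 0 = 0.
Proof. case: Hf => HD _ _ _. by apply/(addrI (f 0)); rewrite -HD !addr0. Qed.
Lemma amD x y : f (x + y) = f x + f y. Proof. by case: Hf. Qed.
Lemma amM x y : f (x * y) = f x * f y. Proof. by case: Hf. Qed.
Lemma am1 : f 1 = 1. Proof. by case: Hf. Qed.
Lemma amZ c x : f (c *: x) = c *: f x. Proof. by case: Hf. Qed.
Lemma amN x : f (- x) = - f x.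
Proof. by apply/(addrI (f x)); rewrite -amD !subrr am0. Qed.
Lemma amB x y : f (x - y) = f x - f y. Proof. by rewrite amD amN. Qed.
Lemma am_sum n (F : 'I_n -> A) : f (\sum_(k < n) F k) = \sum_(k < n) f (F k).
Proof.
elim: n F => [|n IH] F; first by rewrite !big_ord0 am0.
by rewrite !big_ord_recr /= amD IH.
Qed.
Lemma am_alg c : f c%:A = c%:A. Proof. by rewrite amZ am1. Qed.
End Morph.

Lemma alg_morph_comp (C : fieldType) (A B D : comAlgType C) (f : A -> B) (g : B -> D) :
  is_alg_morph f -> is_alg_morph g -> is_alg_morph (g \o f).
Proof.
move=> Hf Hg; split => [x y|x y||c x] /=.
- by rewrite (amD Hf) (amD Hg).
- by rewrite (amM Hf) (amM Hg).
- by rewrite (am1 Hf) (am1 Hg).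
- by rewrite (amZ Hf) (amZ Hg).
Qed.

Lemma alg_morph_id (C : fieldType) (A : comAlgType C) : is_alg_morph (@id A).
Proof. by split. Qed.

Definition catf (X : Type) n m (f : 'I_n -> X) (g : 'I_m -> X) (k : 'I_(n + m)) : X :=
  match split k with inl x => f x | inr y => g y end.

Lemma catfL (X : Type) n m (f : 'I_n -> X) (g : 'I_m -> X) k : catf f g (lshift m k) = f k.
Proof. by rewrite /catf (unsplitK (inl _ k)). Qed.
Lemma catfR (X : Type) n m (f : 'I_n -> X) (g : 'I_m -> X) k : catf f g (rshift n k) = g k.
Proof. by rewrite /catf (unsplitK (inr _ k)). Qed.

Section Span.
Variables (C : fieldType) (A K T : comAlgType C) (i : A -> T) (j : K -> T).
Hypothesis T_tensor : is_tensor_product i j.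

Definition Srep n (a : 'I_n -> A) (l : 'I_n -> K) : T := \sum_(k < n) i (a k) * j (l k).

Definition Sp (t : T) : Prop := exists n (a : 'I_n -> A) (l : 'I_n -> K), t = Srep a l.

Let Hi : is_alg_morph i. Proof. by case: T_tensor. Qed.
Let Hj : is_alg_morph j. Proof. by case: T_tensor. Qed.

Lemma Srep_cat n m (a : 'I_n -> A) l (b : 'I_m -> A) l' :
  Srep (catf a b) (catf l l') = Srep a l + Srep b l'.
Proof.
by rewrite /Srep big_split_ord /=; congr (_ + _); apply: eq_bigr => k _;
  rewrite ?catfL ?catfR.
Qed.

Lemma Sp_add x y : Sp x -> Sp y -> Sp (x + y).
Proof.
move=> [n [a [l ->]]] [m [b [l' ->]]].
by exists (n + m), (catf a b), (catf l l'); rewrite Srep_cat.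
Qed.

Lemma Sp0 : Sp 0.
Proof. by exists 0%N, (fun _ => 0), (fun _ => 0); rewrite /Srep big_ord0. Qed.

Lemma Sp_sum n (F : 'I_n -> T) : (forall k, Sp (F k)) -> Sp (\sum_(k < n) F k).
Proof.
elim: n F => [|n IH] F HF; first by rewrite big_ord0; exact: Sp0.
by rewrite big_ord_recr /=; apply: Sp_add; [apply: IH|].
Qed.

Lemma Sp_pure a l : Sp (i a * j l).
Proof. by exists 1%N, (fun _ => a), (fun _ => l); rewrite /Srep big_ord1. Qed.

Lemma Sp_scale c x : Sp x -> Sp (c *: x).
Proof.
move=> [n [a [l ->]]]; exists n, (fun k => c *: a k), l.
rewrite /Srep scaler_sumr; apply: eq_bigr => k _.
by rewrite (amZ Hi) scalerAl.
Qed.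

Lemma Sp_mul x y : Sp x -> Sp y -> Sp (x * y).
Proof.
move=> [n [a [l ->]]] [m [b [l' ->]]].
rewrite /Srep mulr_suml; apply: Sp_sum => k; rewrite mulr_sumr; apply: Sp_sum => k'.
rewrite mulrACA -(amM Hi) -(amM Hj); exact: Sp_pure.
Qed.

Definition Spb : pred T := fun t => asb (Sp t).

Lemma Spb_alg : GRing.subalg_closed Spb.
Proof.
split.
- apply/asbP; have := Sp_pure 1 1; by rewrite (am1 Hi) (am1 Hj) mulr1.
- move=> c u v /asbP Hu /asbP Hv; apply/asbP; apply: Sp_add => //; exact: Sp_scale.
- move=> u v /asbP Hu /asbP Hv; apply/asbP; exact: Sp_mul.
Qed.

Lemma span_all t : Sp t.
Proof.
pose SS := ST Spb_alg.
have Hi' : forall a, i a \in Spb.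
  by move=> a; apply/asbP; have := Sp_pure a 1; rewrite (am1 Hj) mulr1.
have Hj' : forall l, j l \in Spb.
  by move=> l; apply/asbP; have := Sp_pure 1 l; rewrite (am1 Hi) mul1r.
pose f : A -> SS := fun a => @Sub T (fun x => x \in SK Spb_alg) SS (i a) (Hi' a).
pose g : K -> SS := fun l => @Sub T (fun x => x \in SK Spb_alg) SS (j l) (Hj' l).
have Hf : is_alg_morph f.
  split => [x y|x y||c x]; apply: val_inj; rewrite /= ?SubK.
  - by rewrite (amD Hi).
  - by rewrite (amM Hi).
  - by rewrite (am1 Hi).
  - by rewrite (amZ Hi).
have Hg : is_alg_morph g.
  split => [x y|x y||c x]; apply: val_inj; rewrite /= ?SubK.
  - by rewrite (amD Hj).
  - by rewrite (amM Hj).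
  - by rewrite (am1 Hj).
  - by rewrite (amZ Hj).
case: T_tensor => _ _ U.
have [h [Hh hi hj _]] := U SS f g Hf Hg.
have [h0 [Hh0 h0i h0j uniq]] := U T i j Hi Hj.
have Hv : is_alg_morph (fun x : SS => val x) by split.
have E1 := uniq (fun x => val (h x)) (alg_morph_comp Hh Hv).
have E2 := uniq id (alg_morph_id T).
have e2 : forall t, t = h0 t := E2 (fun _ => erefl) (fun _ => erefl).
have e1a : forall a, val (h (i a)) = i a by move=> a; rewrite hi.
have e1b : forall l, val (h (j l)) = j l by move=> l; rewrite hj.
have e1 : forall t, val (h t) = h0 t := E1 e1a e1b.
have -> : t = val (h t) by rewrite e1 -e2.
have := valP (h t); rewrite /SK /Spb /= => /asbP; done.
Qed.

End Span.
Section Ideals.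
Variables (R : comNzRingType) (I : R -> Prop) (HI : is_ideal I).
Lemma id0 : I 0. Proof. by case: HI. Qed.
Lemma idD x y : I x -> I y -> I (x + y). Proof. by case: HI => _ H _; apply: H. Qed.
Lemma idM r x : I x -> I (r * x). Proof. by case: HI => _ _ H; apply: H. Qed.
Lemma idMr r x : I x -> I (x * r). Proof. by rewrite mulrC; apply: idM. Qed.
Lemma idN x : I x -> I (- x). Proof. by rewrite -mulN1r; apply: idM. Qed.
Lemma idB x y : I x -> I y -> I (x - y). Proof. by move=> ? ?; apply: idD => //; apply: idN. Qed.
Lemma id_sum n (F : 'I_n -> R) : (forall k, I (F k)) -> I (\sum_(k < n) F k).
Proof.
elim: n F => [|n IH] F HF; first by rewrite big_ord0; apply: id0.
by rewrite big_ord_recr /=; apply: idD => //; apply: IH.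
Qed.
Lemma idMn x n : I x -> I (x *+ n). Proof. by rewrite -mulr_natr; apply: idMr. Qed.
Lemma id_eq x y : I x -> I (y - x) -> I y.
Proof. by move=> Hx Hyx; rewrite -(subrK x y); apply: idD. Qed.
End Ideals.

Lemma ideal_gen_ideal (R : comNzRingType) (S : R -> Prop) : is_ideal (ideal_gen S).
Proof.
split.
- by exists 0%N, (fun _ => 0), (fun _ => 0); split => [[]//|]; rewrite big_ord0.
- move=> x y [n [r [s [Hs ->]]]] [m [r' [s' [Hs' ->]]]].
  exists (n + m), (catf r r'), (catf s s'); split.
    by move=> k; rewrite /catf; case: split.
  by rewrite big_split_ord /=; congr (_ + _); apply: eq_bigr => k _;
    rewrite ?catfL ?catfR.
- move=> c x [n [r [s [Hs ->]]]]; exists n, (fun k => c * r k), s; split => //.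
  by rewrite mulr_sumr; apply: eq_bigr => k _; rewrite mulrA.
Qed.

Lemma ideal_gen_sub (R : comNzRingType) (S : R -> Prop) x : S x -> ideal_gen S x.
Proof. by move=> Hx; exists 1%N, (fun _ => 1), (fun _ => x); split => //; rewrite big_ord1 mul1r. Qed.

Section Main.
Variables (Delta : Type) (C : fieldType) (K : comAlgType C) (dK : Delta -> K -> K).
Hypothesis dK_der : forall D, is_derivation (dK D).
Hypothesis K_simple : Delta_simple dK.
Hypothesis K_Qalg : forall n : nat, exists y : K, y * (n.+1)%:R = 1.
Hypothesis K_const : forall x : K, (forall D, dK D x = 0) <-> exists c : C, x = c%:A.
Variables (phi : K -> C^o) (phi_morph : is_alg_morph phi).
Variables (A : comAlgType C) (T : comAlgType C) (i : A -> T) (j : K -> T).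
Hypothesis T_tensor : is_tensor_product i j.
Variable (dT : Delta -> T -> T).
Hypothesis dT_der : forall D, is_derivation (dT D).
Hypothesis dT_def : forall D (a : A) (l : K), dT D (i a * j l) = i a * j (dK D l).
Variables (p : A -> Prop) (p_prime : is_prime_ideal p).
Variables (Phi : T -> A) (HPhi : is_alg_morph Phi).
Hypothesis Phii : forall a, Phi (i a) = a.
Hypothesis Phij : forall l, Phi (j l) = (phi l)%:A.

Let Hi : is_alg_morph i. Proof. by case: T_tensor. Qed.
Let Hj : is_alg_morph j. Proof. by case: T_tensor. Qed.
Let p_ideal : is_ideal p. Proof. by case: p_prime. Qed.
Let p1 : ~ p 1. Proof. by case: p_prime. Qed.
Let p_pr x y : p (x * y) -> p x \/ p y. Proof. by case: p_prime => _ _; apply. Qed.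

Definition J := ideal_gen (img i p).
Let J_ideal : is_ideal J. Proof. exact: ideal_gen_ideal. Qed.

Lemma der0 (R : comNzRingType) (d : R -> R) : is_derivation d -> d 0 = 0.
Proof. by case=> HD _; apply/(addrI (d 0)); rewrite -HD !addr0. Qed.
Lemma derN (R : comNzRingType) (d : R -> R) : is_derivation d -> forall x, d (- x) = - d x.
Proof. move=> Hd x; case: (Hd) => HD _; apply/(addrI (d x)); by rewrite -HD !subrr der0. Qed.
Lemma derB (R : comNzRingType) (d : R -> R) : is_derivation d -> forall x y, d (x - y) = d x - d y.
Proof. by move=> Hd x y; case: (Hd) => HD _; rewrite HD derN. Qed.
Lemma der1 (R : comNzRingType) (d : R -> R) : is_derivation d -> d 1 = 0.
Proof. case=> _ HM; have := HM 1 1; rewrite !mulr1 mul1r => E. by apply/(addrI (d 1)); rewrite addr0 -E. Qed.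
Lemma der_sum (R : comNzRingType) (d : R -> R) : is_derivation d ->
  forall n (F : 'I_n -> R), d (\sum_(k < n) F k) = \sum_(k < n) d (F k).
Proof.
move=> Hd; elim=> [|n IH] F; first by rewrite !big_ord0 der0.
by case: (Hd) => HD _; rewrite !big_ord_recr /= HD IH.
Qed.
Lemma derM (R : comNzRingType) (d : R -> R) : is_derivation d ->
  forall x y, d (x * y) = d x * y + x * d y.
Proof. by case. Qed.
Lemma derD (R : comNzRingType) (d : R -> R) : is_derivation d ->
  forall x y, d (x + y) = d x + d y.
Proof. by case. Qed.

Lemma dT_i D a : dT D (i a) = 0.
Proof. by rewrite -[i a]mulr1 -(am1 Hj) dT_def der1 // (am0 Hj) mulr0. Qed.

Lemma J_i a : p a -> J (i a).
Proof. by move=> Ha; apply: ideal_gen_sub; exists a. Qed.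

Lemma J_delta D x : J x -> J (dT D x).
Proof.
move=> [n [r [s [Hs ->]]]]; rewrite der_sum //; apply: id_sum => // k.
have [a Ha ->] := Hs k.
rewrite derM // dT_i mulr0 addr0; apply: idM => //; exact: J_i.
Qed.

Lemma Phi_J x : J x -> p (Phi x).
Proof.
move=> [n [r [s [Hs ->]]]]; rewrite am_sum //; apply: id_sum => // k.
have [a Ha ->] := Hs k; rewrite (amM HPhi) Phii; exact: idM.
Qed.

Lemma J1 : ~ J 1.
Proof. by move=> /Phi_J; rewrite (am1 HPhi). Qed.

Fixpoint dKw (w : seq Delta) (x : K) : K := if w is D :: w' then dKw w' (dK D x) else x.
Fixpoint dTw (w : seq Delta) (x : T) : T := if w is D :: w' then dTw w' (dT D x) else x.

Lemma dKw0 w : dKw w 0 = 0.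
Proof. by elim: w => //= D w IH; rewrite der0. Qed.
Lemma dKwD w x y : dKw w (x + y) = dKw w x + dKw w y.
Proof. by elim: w x y => //= D w IH x y; rewrite derD. Qed.
Lemma dTwD w x y : dTw w (x + y) = dTw w x + dTw w y.
Proof. by elim: w x y => //= D w IH x y; rewrite derD. Qed.
Lemma dTw0 w : dTw w 0 = 0.
Proof. by elim: w => //= D w IH; rewrite der0. Qed.
Lemma dTw_sum w n (F : 'I_n -> T) : dTw w (\sum_(k < n) F k) = \sum_(k < n) dTw w (F k).
Proof.
elim: n F => [|n IH] F; first by rewrite !big_ord0 dTw0.
by rewrite !big_ord_recr /= dTwD IH.
Qed.
Lemma dTw_def w a l : dTw w (i a * j l) = i a * j (dKw w l).
Proof. by elim: w l => //= D w IH l; rewrite dT_def IH. Qed.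
Lemma J_deltaw w x : J x -> J (dTw w x).
Proof. by elim: w x => //= D w IH x Hx; apply: IH; apply: J_delta. Qed.

Definition TI (l : K) : Prop := forall w, phi (dKw w l) = 0.

Lemma TI_mul w r l : TI l -> phi (dKw w (r * l)) = 0.
Proof.
elim: w r l => [|D w IH] r l Hl /=.
  by rewrite (amM phi_morph); have := Hl [::]; rewrite /= => ->; rewrite mulr0.
rewrite derM // dKwD (amD phi_morph) !IH ?addr0 //.
by move=> w'; apply: (Hl (D :: w')).
Qed.

Lemma TI_Delta : is_Delta_ideal dK TI.
Proof.
split; first split.
- by move=> w; rewrite dKw0 (am0 phi_morph).
- by move=> x y Hx Hy w; rewrite dKwD (amD phi_morph) Hx Hy addr0.
- by move=> r x Hx w; apply: TI_mul.
- by move=> D x Hx w; apply: (Hx (D :: w)).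
Qed.

Lemma TI_zero l : TI l -> l = 0.
Proof.
case: (K_simple TI_Delta) => [H|H] Hl; first by apply/H.
by have := H 1 [::]; rewrite /= (am1 phi_morph) => /eqP; rewrite oner_eq0.
Qed.

Definition indep n (a : 'I_n -> A) :=
  forall c : 'I_n -> C, p (\sum_(k < n) c k *: a k) -> forall k, c k = 0.

Lemma Phi_Srep n (a : 'I_n -> A) l :
  Phi (Srep i j a l) = \sum_(k < n) phi (l k) *: a k.
Proof.
rewrite /Srep am_sum //; apply: eq_bigr => k _.
by rewrite (amM HPhi) Phii Phij mulr_algr.
Qed.

Lemma dTw_Srep w n (a : 'I_n -> A) l :
  dTw w (Srep i j a l) = Srep i j a (fun k => dKw w (l k)).
Proof. by rewrite /Srep dTw_sum; apply: eq_bigr => k _; rewrite dTw_def. Qed.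

Lemma IND n (a : 'I_n -> A) l : indep a -> J (Srep i j a l) -> forall k, l k = 0.
Proof.
move=> Hind HJ k; apply: TI_zero => w.
have := Phi_J (J_deltaw w HJ); rewrite dTw_Srep Phi_Srep.
by move/Hind; apply.
Qed.

Lemma indep0 (a : 'I_0 -> A) : indep a.
Proof. by move=> c _ []. Qed.

Lemma p_scale (c : C) x : p x -> p (c *: x).
Proof. by move=> Hx; rewrite -mulr_algl; apply: idM. Qed.

Lemma shorten n (a : 'I_n.+1 -> A) l : ~ indep a ->
  exists (a' : 'I_n -> A) l', J (Srep i j a l - Srep i j a' l').
Proof.
move=> Hn.
have [c [Hc [k0 Hk0]]] : exists c : 'I_n.+1 -> C,
    p (\sum_(k < n.+1) c k *: a k) /\ exists k, c k <> 0.
  apply: NNPP => H; apply: Hn => c Hc k; apply: NNPP => Hck.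
  by apply: H; exists c; split => //; exists k.
pose e k := c (lift k0 k) / c k0.
exists (fun k => a (lift k0 k)), (fun k => l (lift k0 k) - e k *: l k0).
have -> : Srep i j a l - Srep i j (fun k => a (lift k0 k)) (fun k => l (lift k0 k) - e k *: l k0)
   = i (a k0 + \sum_(k < n) e k *: a (lift k0 k)) * j (l k0).
  rewrite /Srep (bigD1_ord k0) //= -addrA -sumrB.
  rewrite (amD Hi) mulrDl; congr (_ + _).
  rewrite (am_sum Hi) mulr_suml; apply: eq_bigr => k _.
  rewrite -mulrBr -(amB Hj) opprB addrC subrK (amZ Hj) (amZ Hi).
  by rewrite scalerCA.
apply: idMr => //; apply: J_i.
have -> : a k0 + \sum_(k < n) e k *: a (lift k0 k) = (c k0)^-1 *: \sum_(k < n.+1) c k *: a k.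
  rewrite [in RHS](bigD1_ord k0) //= scalerDr scalerA mulVf ?scale1r; last by apply/eqP.
  rewrite scaler_sumr; apply: (congr1 (fun z => a k0 + z)).
  apply: eq_bigr => k _; by rewrite scalerA mulrC.
exact: p_scale.
Qed.

Lemma Srep_add n (a : 'I_n -> A) l1 l2 :
  Srep i j a (fun k => l1 k + l2 k) = Srep i j a l1 + Srep i j a l2.
Proof. by rewrite /Srep -big_split; apply: eq_bigr => k _; rewrite (amD Hj) mulrDr. Qed.
Lemma Srep_mul n (a : 'I_n -> A) r l :
  Srep i j a (fun k => r * l k) = j r * Srep i j a l.
Proof. by rewrite /Srep mulr_sumr; apply: eq_bigr => k _; rewrite (amM Hj) mulrCA. Qed.
Lemma Srep_dT D n (a : 'I_n -> A) l :
  dT D (Srep i j a l) = Srep i j a (fun k => dK D (l k)).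
Proof. exact: (dTw_Srep [:: D]). Qed.
Lemma Srep0 n (a : 'I_n -> A) : Srep i j a (fun _ => 0) = 0.
Proof. by rewrite /Srep big1 // => k _; rewrite (am0 Hj) mulr0. Qed.
Lemma Srep_recl n (a : 'I_n.+1 -> A) l :
  Srep i j a l = i (a ord0) * j (l ord0) +
     Srep i j (fun k => a (lift ord0 k)) (fun k => l (lift ord0 k)).
Proof. by rewrite /Srep big_ord_recl. Qed.
Lemma Srep_ord0 (a : 'I_0 -> A) l : Srep i j a l = 0.
Proof. by rewrite /Srep big_ord0. Qed.

Lemma stepC (I : T -> Prop) (HI : is_Delta_ideal dT I) (HJI : forall x, J x -> I x) :
  forall n z (a : 'I_n -> A) l, I z -> ~ J z -> J (z - Srep i j a l) ->
  exists b, ~ p b /\ I (i b).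
Proof.
have HIi : is_ideal I by case: HI.
move=> n; elim/ltn_ind: n => n IH z a l Iz nJz Hrep.
case: n IH a l Hrep => [|m] IH a l Hrep.
  by exfalso; apply: nJz; move: Hrep; rewrite Srep_ord0 subr0.
case: (classic (indep a)) => Hind; last first.
  have [a' [l' Hs]] := shorten l Hind.
  apply: (IH m (ltnSn m) z a' l') => //.
  have -> : z - Srep i j a' l' = (z - Srep i j a l) + (Srep i j a l - Srep i j a' l') by ring.
  exact: idD.
pose a0 := a ord0; pose a' := fun k => a (lift ord0 k).
case: (classic (l ord0 = 0)) => Hl0.
  apply: (IH m (ltnSn m) z a' (fun k => l (lift ord0 k))) => //.
  by move: Hrep; rewrite Srep_recl Hl0 (am0 Hj) mulr0 add0r.
pose L := fun mu : K => exists y (nu : 'I_m -> K), I y /\ J (y - (i a0 * j mu + Srep i j a' nu)).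
have HL : is_Delta_ideal dK L.
  split; first split.
  - exists 0, (fun _ => 0); split; first by case: HIi.
    by rewrite Srep0 (am0 Hj) mulr0 addr0 subrr; apply: id0.
  - move=> x1 x2 [y1 [nu1 [Iy1 Jy1]]] [y2 [nu2 [Iy2 Jy2]]].
    exists (y1 + y2), (fun k => nu1 k + nu2 k); split; first exact: idD.
    rewrite Srep_add (amD Hj).
    set S1 := Srep _ _ _ nu1 in Jy1 *; set S2 := Srep _ _ _ nu2 in Jy2 *.
    have -> : y1 + y2 - (i a0 * (j x1 + j x2) + (S1 + S2)) =
      (y1 - (i a0 * j x1 + S1)) + (y2 - (i a0 * j x2 + S2)) by ring.
    exact: idD.
  - move=> r x [y [nu [Iy Jy]]]; exists (j r * y), (fun k => r * nu k); split; first exact: idM.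
    rewrite Srep_mul (amM Hj).
    set S1 := Srep _ _ _ nu in Jy *.
    have -> : j r * y - (i a0 * (j r * j x) + j r * S1) = j r * (y - (i a0 * j x + S1)) by ring.
    exact: idM.
  - move=> D x [y [nu [Iy Jy]]]; exists (dT D y), (fun k => dK D (nu k)); split.
      by case: HI => _; apply.
    rewrite -Srep_dT -dT_def -derD // -derB //; exact: J_delta.
have [H0|H1] := K_simple HL.
  exfalso; apply: Hl0; apply/H0.
  exists z, (fun k => l (lift ord0 k)); split => //.
  by rewrite -Srep_recl.
have [y [nu [Iy Jy]]] := H1 1.
have HdTy : forall D, dT D y - Srep i j a' (fun k => dK D (nu k)) =
                      dT D (y - (i a0 * j 1 + Srep i j a' nu)).
  move=> D; rewrite derB // derD // dT_def der1 // (am0 Hj) mulr0 add0r Srep_dT //.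
case: (classic (exists D, ~ J (dT D y))) => [[D HD]|HD].
  apply: (IH m (ltnSn m) (dT D y) a' (fun k => dK D (nu k))) => //.
    by case: HI => _; apply.
  rewrite HdTy; exact: J_delta.
have Hnu : forall k D, dK D (nu k) = 0.
  move=> k D.
  have JD : J (dT D y) by apply: NNPP => H; apply: HD; exists D.
  pose l2 := fun k : 'I_m.+1 => if unlift ord0 k is Some k' then dK D (nu k') else 0.
  have : J (Srep i j a l2).
    rewrite Srep_recl /l2 unlift_none (am0 Hj) mulr0 add0r.
    have -> : Srep i j (fun k => a (lift ord0 k))
        (fun k => if unlift ord0 (lift ord0 k) is Some k' then dK D (nu k') else 0)
        = Srep i j a' (fun k => dK D (nu k)).
      by rewrite /Srep; apply: eq_bigr => k' _; rewrite liftK.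
    apply: (id_eq J_ideal JD).
    have -> : Srep i j a' (fun k => dK D (nu k)) - dT D y =
      - (dT D y - Srep i j a' (fun k => dK D (nu k))) by ring.
    rewrite HdTy; apply: idN => //; exact: J_delta.
  move/(IND Hind)/(_ (lift ord0 k)); by rewrite /l2 liftK.
have cx : forall k, exists c : C, nu k = c%:A by move=> k; apply/K_const => D; apply: Hnu.
pose c := fun k => proj1_sig (constructive_indefinite_description _ (cx k)).
have Hc : forall k, nu k = (c k)%:A by move=> k; rewrite /c; case: constructive_indefinite_description.
pose b := a0 + \sum_(k < m) c k *: a' k.
have Hb : i a0 * j 1 + Srep i j a' nu = i b.
  rewrite (am1 Hj) mulr1 (amD Hi) (am_sum Hi) /Srep; congr (_ + _).
  by apply: eq_bigr => k _; rewrite Hc (am_alg Hj) mulr_algr (amZ Hi).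
exists b; split.
  move=> pb.
  pose c' := fun k : 'I_m.+1 => if unlift ord0 k is Some k' then c k' else 1.
  have : p (\sum_(k < m.+1) c' k *: a k).
    rewrite big_ord_recl /c' unlift_none scale1r.
    have -> : \sum_(k < m) (if unlift ord0 (lift ord0 k) is Some k' then c k' else 1) *: a (lift ord0 k)
      = \sum_(k < m) c k *: a' k by apply: eq_bigr => k _; rewrite liftK.
    exact: pb.
  move/Hind/(_ ord0); rewrite /c' unlift_none => /eqP; by rewrite oner_eq0.
apply: (id_eq HIi Iy); apply: HJI.
have -> : i b - y = - (y - (i a0 * j 1 + Srep i j a' nu)) by rewrite Hb; ring.
exact: idN.
Qed.

Lemma stepD b x : ~ p b -> J (i b * x) -> J x.
Proof.
move=> nb.
have [n [a [l Hx]]] := span_all T_tensor x.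
have : J (x - Srep i j a l) by rewrite Hx subrr; apply: id0.
move: a l {Hx}; elim/ltn_ind: n x => n IH x a l Hrep Jbx.
case: (classic (indep a)) => Hind; last first.
  case: n IH a l Hrep Hind => [|m] IH a l Hrep Hind; first by exfalso; apply: Hind; exact: indep0.
  have [a' [l' Hs]] := shorten l Hind.
  apply: (IH m (ltnSn m) x a' l') => //.
  have -> : x - Srep i j a' l' = (x - Srep i j a l) + (Srep i j a l - Srep i j a' l') by ring.
  exact: idD.
have Hind' : indep (fun k => b * a k).
  move=> c Hc; apply: Hind.
  have : p (b * \sum_(k < n) c k *: a k).
    by rewrite mulr_sumr; under eq_bigr => k _ do rewrite -scalerAr.
  by case/p_pr.
have : J (Srep i j (fun k => b * a k) l).
  have -> : Srep i j (fun k => b * a k) l = i b * x - i b * (x - Srep i j a l).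
    rewrite mulrBr opprB addrC subrK /Srep mulr_sumr; apply: eq_bigr => k _.
    by rewrite (amM Hi) mulrA.
  by apply: idB => //; apply: idM.
move/(IND Hind') => Hl.
apply: (id_eq J_ideal Hrep); have -> : Srep i j a l = 0.
  by rewrite -(Srep0 a); rewrite /Srep; apply: eq_bigr => k _; rewrite Hl.
by rewrite opprB addrC subrK; apply: id0.
Qed.

Lemma derX (R : comNzRingType) (d : R -> R) : is_derivation d ->
  forall x s, d (x ^+ s.+1) = (x ^+ s * d x) *+ s.+1.
Proof.
move=> Hd x; elim=> [|s IH]; first by rewrite expr1 expr0 mul1r.
rewrite exprS derM // IH mulrnAr mulrA -exprS [in RHS]mulrS.
by rewrite mulrC.
Qed.

Lemma derX' (R : comNzRingType) (d : R -> R) : is_derivation d ->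
  forall x s, x * d (x ^+ s) = (x ^+ s * d x) *+ s.
Proof.
move=> Hd x [|s]; first by rewrite expr0 der1 // mulr0 mulr0n.
by rewrite derX // mulrnAr mulrA -exprS mulrC exprS.
Qed.

Lemma am_nat (R1 R2 : comAlgType C) (f : R1 -> R2) : is_alg_morph f -> forall n, f n%:R = n%:R.
Proof.
move=> Hf; elim=> [|n IH]; first by rewrite (am0 Hf).
by rewrite !mulrS (amD Hf) IH (am1 Hf).
Qed.

Lemma J_natdiv w m : J (w *+ m.+1) -> J w.
Proof.
move=> Hw; have [y Hy] := K_Qalg m.
have -> : w = j y * (w *+ m.+1).
  by rewrite -mulr_natr mulrCA -(am_nat Hj) -(amM Hj) Hy (am1 Hj) mulr1.
exact: idM.
Qed.

Lemma Ritt D z n : J (z ^+ n) -> J ((dT D z) ^+ n.*2).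
Proof.
move=> Hn.
suff H : forall k, (k <= n)%N -> J (z ^+ (n - k) * (dT D z) ^+ k.*2).
  by have := H n (leqnn n); rewrite subnn expr0 mul1r.
elim=> [|k IH] Hk; first by rewrite subn0 mulr1.
have Hu := IH (ltnW Hk).
set m := (n - k.+1)%N.
have Em : (n - k = m.+1)%N by rewrite /m subnSK.
rewrite Em in Hu.
set z' := dT D z in Hu *.
set u := z ^+ m.+1 * z' ^+ k.*2 in Hu.
have E : z' * dT D u = (z ^+ m * z' ^+ k.+1.*2) *+ m.+1 + (dT D z' * u) *+ k.*2.
  rewrite /u derM // derX // mulrDr.
  have -> : z' * (z ^+ m.+1 * dT D (z' ^+ k.*2)) = z ^+ m.+1 * (z' * dT D (z' ^+ k.*2)) by ring.
  rewrite (derX' (dT_der D)); congr (_ + _).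
    rewrite mulrnAl mulrnAr; congr (_ *+ _).
    by rewrite doubleS !exprS; rewrite /z'; ring.
  by rewrite mulrnAr; congr (_ *+ _); ring.
apply: (J_natdiv (m := m)).
have -> : (z ^+ m * z' ^+ k.+1.*2) *+ m.+1 = z' * dT D u - (dT D z' * u) *+ k.*2
  by rewrite E addrK.
apply: (idB J_ideal); first by apply: (idM J_ideal); exact: J_delta.
by apply: (idMn J_ideal); apply: (idM J_ideal).
Qed.

Definition N (z : T) : Prop := exists n, J (z ^+ n).

Lemma N_Delta : is_Delta_ideal dT N.
Proof.
split; first split.
- by exists 1%N; rewrite expr1; apply: id0.
- move=> x y [n Hn] [m Hm]; exists (n + m)%N; rewrite exprDn.
  apply: (id_sum J_ideal) => k; apply: (idMn J_ideal).
  have Hk : (k <= n + m)%N by rewrite -ltnS.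
  case: (leqP m k) => Hmk.
    have -> : y ^+ k = y ^+ m * y ^+ (k - m) by rewrite -exprD subnKC.
    by rewrite mulrCA; apply: (idMr J_ideal).
  have -> : (n + m - k = n + (m - k))%N by rewrite addnBA // ltnW.
  by rewrite exprD -mulrA; apply: (idMr J_ideal).
- move=> r x [n Hn]; exists n; rewrite exprMn; exact: (idM J_ideal).
- move=> D x [n Hn]; exists n.*2; exact: Ritt.
Qed.

Lemma amX (R1 R2 : comAlgType C) (f : R1 -> R2) : is_alg_morph f -> forall x n, f (x ^+ n) = f x ^+ n.
Proof.
move=> Hf x; elim=> [|n IH]; first by rewrite !expr0 (am1 Hf).
by rewrite !exprS (amM Hf) IH.
Qed.

Lemma p_pow b n : p (b ^+ n) -> p b.
Proof.
elim: n => [|n IH]; first by rewrite expr0 => /p1.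
by rewrite exprS => /p_pr [|/IH].
Qed.

Lemma N_J z : N z -> J z.
Proof.
move=> Nz; apply: NNPP => nJz.
have [n [a [l Hz]]] := span_all T_tensor z.
have JN : forall x, J x -> N x by move=> x Jx; exists 1%N; rewrite expr1.
have Hr : J (z - Srep i j a l) by rewrite Hz subrr; apply: id0.
have [b [nb [k Hk]]] := stepC N_Delta JN Nz nJz Hr.
apply: nb; apply: (p_pow (n := k)).
by have := Phi_J Hk; rewrite -(amX Hi) Phii.
Qed.

Lemma J_prime x y : J (x * y) -> J x \/ J y.
Proof.
move=> Jxy; case: (classic (J x)) => Jx; [by left|right].
apply: NNPP => nJy.
pose Ann := fun u => J (x * u).
have HA : is_Delta_ideal dT Ann.
  split; first split.
  - by rewrite /Ann mulr0; apply: id0.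
  - by move=> u v Hu Hv; rewrite /Ann mulrDr; apply: idD.
  - by move=> r u Hu; rewrite /Ann mulrCA; apply: idM.
  - move=> D u Hu; rewrite /Ann.
    have H1 : J (dT D x * u + x * dT D u) by rewrite -derM //; apply: J_delta.
    have H2 : J (dT D x * u).
      apply: N_J; exists 2%N.
      have -> : (dT D x * u) ^+ 2 = (dT D x * u) * (dT D x * u + x * dT D u)
                                   - (x * u) * (dT D x * dT D u) by ring.
      by apply: (idB J_ideal); [apply: (idM J_ideal)|apply: (idMr J_ideal)].
    have -> : x * dT D u = (dT D x * u + x * dT D u) - dT D x * u by ring.
    exact: idB.
have [n [a [l Hy]]] := span_all T_tensor y.
have Hr : J (y - Srep i j a l) by rewrite Hy subrr; apply: id0.
have [b [nb Hb]] := stepC HA (fun u Ju => idM J_ideal x Ju) Jxy nJy Hr.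
by apply: Jx; apply: (stepD nb); rewrite mulrC.
Qed.

End Main.

Unset Implicit Arguments.

Theorem corollary5p1
  (Delta : Type) (C : fieldType) (K : comAlgType C) (dK : Delta -> K -> K)
  (dK_der : forall D, is_derivation (dK D))
  (K_simple : Delta_simple dK)
  (K_Qalg : forall n : nat, exists y : K, y * (n.+1)%:R = 1)
  (K_const : forall x : K, (forall D, dK D x = 0) <-> exists c : C, x = c%:A)
  (phi : K -> C^o) (phi_morph : is_alg_morph phi)
  (A : comAlgType C) (T : comAlgType C) (i : A -> T) (j : K -> T)
  (T_tensor : is_tensor_product i j)
  (dT : Delta -> T -> T) (dT_der : forall D, is_derivation (dT D))
  (dT_def : forall D (a : A) (l : K), dT D (i a * j l) = i a * j (dK D l))
  (p : A -> Prop) (p_prime : is_prime_ideal p) :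
  is_prime_ideal (ideal_gen (img i p)) /\ is_Delta_ideal dT (ideal_gen (img i p)).
Proof.
have Hi : is_alg_morph i by case: T_tensor.
have Hj : is_alg_morph j by case: T_tensor.
have Hg : is_alg_morph (fun l : K => (phi l)%:A : A).
  split => [x y|x y||c x].
  - by rewrite (amD phi_morph) scalerDl.
  - by rewrite (amM phi_morph) -scalerA mulr_algl.
  - by rewrite (am1 phi_morph) scale1r.
  - by rewrite (amZ phi_morph) scalerA.
have [Phi [HPhi Phii Phij _]] := (let: And3 _ _ U := T_tensor in U) A id _ (alg_morph_id A) Hg.
split.
- split.
  + exact: ideal_gen_ideal.
  + exact: (J1 p_prime HPhi Phii).
  + move=> x y; exact: (J_prime dK_der K_simple K_Qalg K_const phi_morph T_tensor dT_der dT_def p_prime HPhi Phii Phij).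
- split; first exact: ideal_gen_ideal.
  move=> D x; exact: (J_delta dK_der T_tensor dT_der dT_def D).
Qed.
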